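(* The operators $L_1$ and $L_2$ commute: $L_1L_2=L_2L_1$ on the space of polynomials in $x,y$.
   Context: $R_x f(x,y)=f(-x,y)$, $R_yf(x,y)=f(x,-y)$, $\mathbb I$ the identity, compositions act right-to-left, coefficients act by multiplication; $\alpha,\beta,\gamma,\delta$ are real parameters with $\delta\neq\pm1$. $$L_1=G_5R_xR_y\partial_y+G_6R_y\partial_y+G_7R_xR_y\partial_x+G_8R_x\partial_x+G_1R_xR_y+G_2R_x+G_3R_y-(G_1+G_2+G_3)\,\mathbb I,$$ with $G_1=\frac{x[1+\beta+\gamma-y(\alpha+\beta+\gamma+2)]-\delta[y(\alpha+\gamma+1)-\gamma]}{4xy}$, $G_2=-\frac{x[x(\beta+\gamma+1)-\beta y]+\delta(y+\gamma x)}{4x^2y}$, $G_3=-\delta\,\frac{x+\alpha xy-y[y(\alpha+\gamma+1)-\gamma]}{4xy^2}$, $G_5=\frac{(\delta+x)(y-1)}{2x}$, $G_6=\frac{\delta(x-y)(y-1)}{2xy}$, $G_7=\frac{(\delta+x)(y-1)}{2y}$, $G_8=\frac{(\delta+x)(x-y)}{2xy}$; and $$L_2=\frac{2(y-x)(x+\delta)}{x}R_x\partial_x+\frac{(\gamma+\beta+1)x^2+(\delta\gamma-\beta y)x+\delta y}{x^2}\,(R_x-\mathbb I).$$ *)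

(* Defs.v *)
From Stdlib Require Import Reals ClassicalEpsilon.
Open Scope R_scope.

Definition bipoly (c : nat -> nat -> R) (N : nat) : R -> R -> R :=
  fun x y => sum_f_R0 (fun i => sum_f_R0 (fun j => c i j * x ^ i * y ^ j) N) N.

(* Partial derivatives (the derivative when it exists; chosen by epsilon). *)
Definition Dx (f : R -> R -> R) : R -> R -> R :=
  fun x y => epsilon (inhabits 0) (fun l => derivable_pt_lim (fun t => f t y) x l).
Definition Dy (f : R -> R -> R) : R -> R -> R :=
  fun x y => epsilon (inhabits 0) (fun l => derivable_pt_lim (fun t => f x t) y l).

Section Ops.
Variables (al be ga de : R).

Definition G1 x y := (x * (1 + be + ga - y * (al + be + ga + 2)) - de * (y * (al + ga + 1) - ga)) / (4 * x * y).
Definition G2 x y := - (x * (x * (be + ga + 1) - be * y) + de * (y + ga * x)) / (4 * x ^ 2 * y).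
Definition G3 x y := - de * (x + al * x * y - y * (y * (al + ga + 1) - ga)) / (4 * x * y ^ 2).
Definition G5 x y := (de + x) * (y - 1) / (2 * x).
Definition G6 x y := de * (x - y) * (y - 1) / (2 * x * y).
Definition G7 x y := (de + x) * (y - 1) / (2 * y).
Definition G8 x y := (de + x) * (x - y) / (2 * x * y).

(* R_x R_y d_y f = (x,y) |-> (d_y f)(-x,-y), etc. *)
Definition L1 (f : R -> R -> R) : R -> R -> R := fun x y =>
  G5 x y * Dy f (-x) (-y) + G6 x y * Dy f x (-y)
  + G7 x y * Dx f (-x) (-y) + G8 x y * Dx f (-x) y
  + G1 x y * f (-x) (-y) + G2 x y * f (-x) y + G3 x y * f x (-y)
  - (G1 x y + G2 x y + G3 x y) * f x y.

Definition L2 (f : R -> R -> R) : R -> R -> R := fun x y =>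
  2 * (y - x) * (x + de) / x * Dx f (-x) y
  + ((ga + be + 1) * x ^ 2 + (de * ga - be * y) * x + de * y) / x ^ 2 * (f (-x) y - f x y).

End Ops.

(* Main.v *)
Require Import Defs.
From Stdlib Require Import Reals.
From Stdlib Require Import Lra ClassicalEpsilon FunctionalExtensionality.
From Coquelicot Require Import Coquelicot.
Open Scope R_scope.

Definition FX (c : nat -> nat -> R) N a b :=
  sum_f_R0 (fun i => sum_f_R0 (fun j => c i j * (INR i * a ^ pred i) * b ^ j) N) N.
Definition FY (c : nat -> nat -> R) N a b :=
  sum_f_R0 (fun i => sum_f_R0 (fun j => c i j * a ^ i * (INR j * b ^ pred j)) N) N.
Definition FXX (c : nat -> nat -> R) N a b :=
  sum_f_R0 (fun i => sum_f_R0 (fun j => c i j * (INR i * (INR (pred i) * a ^ pred (pred i))) * b ^ j) N) N.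
Definition FXY (c : nat -> nat -> R) N a b :=
  sum_f_R0 (fun i => sum_f_R0 (fun j => c i j * (INR i * a ^ pred i) * (INR j * b ^ pred j)) N) N.
Definition FYY (c : nat -> nat -> R) N a b :=
  sum_f_R0 (fun i => sum_f_R0 (fun j => c i j * a ^ i * (INR j * (INR (pred j) * b ^ pred (pred j)))) N) N.

Lemma is_derive_sum (g : nat -> R -> R) (g' : nat -> R) a n :
  (forall i, is_derive (g i) a (g' i)) ->
  is_derive (fun t => sum_f_R0 (fun i => g i t) n) a (sum_f_R0 g' n).
Proof.
  intros H. induction n as [|n IH]; simpl.
  - apply H.
  - apply (is_derive_plus (fun t => sum_f_R0 (fun i => g i t) n) (g (S n))); auto.
Qed.

Lemma mono_x (k m : R) i a : is_derive (fun t => k * t^i * m) a (k * (INR i * a^pred i) * m).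
Proof. auto_derive. auto. ring. Qed.
Lemma mono_y (k m : R) i a : is_derive (fun t => k * m * t^i) a (k * m * (INR i * a^pred i)).
Proof. auto_derive. auto. ring. Qed.

Lemma isdx_F c N a b : is_derive (fun t => bipoly c N t b) a (FX c N a b).
Proof.
  unfold bipoly, FX. apply (is_derive_sum (fun i t => sum_f_R0 (fun j => c i j * t ^ i * b ^ j) N)).
  intro i. apply (is_derive_sum (fun j t => c i j * t ^ i * b ^ j)). intro j. apply mono_x.
Qed.
Lemma isdy_F c N a b : is_derive (fun t => bipoly c N a t) b (FY c N a b).
Proof.
  unfold bipoly, FY. apply (is_derive_sum (fun i t => sum_f_R0 (fun j => c i j * a ^ i * t ^ j) N)).
  intro i. apply (is_derive_sum (fun j t => c i j * a ^ i * t ^ j)). intro j. apply mono_y.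
Qed.
Lemma isdx_FX c N a b : is_derive (fun t => FX c N t b) a (FXX c N a b).
Proof.
  unfold FX, FXX. apply (is_derive_sum (fun i t => sum_f_R0 (fun j => c i j * (INR i * t ^ pred i) * b ^ j) N)).
  intro i. apply (is_derive_sum (fun j t => c i j * (INR i * t ^ pred i) * b ^ j)). intro j.
  auto_derive. auto. ring.
Qed.
Lemma isdy_FX c N a b : is_derive (fun t => FX c N a t) b (FXY c N a b).
Proof.
  unfold FX, FXY. apply (is_derive_sum (fun i t => sum_f_R0 (fun j => c i j * (INR i * a ^ pred i) * t ^ j) N)).
  intro i. apply (is_derive_sum (fun j t => c i j * (INR i * a ^ pred i) * t ^ j)). intro j.
  apply mono_y.
Qed.
Lemma isdx_FY c N a b : is_derive (fun t => FY c N t b) a (FXY c N a b).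
Proof.
  unfold FY, FXY. apply (is_derive_sum (fun i t => sum_f_R0 (fun j => c i j * t ^ i * (INR j * b ^ pred j)) N)).
  intro i. apply (is_derive_sum (fun j t => c i j * t ^ i * (INR j * b ^ pred j))). intro j.
  apply mono_x.
Qed.
Lemma isdy_FY c N a b : is_derive (fun t => FY c N a t) b (FYY c N a b).
Proof.
  unfold FY, FYY. apply (is_derive_sum (fun i t => sum_f_R0 (fun j => c i j * a ^ i * (INR j * t ^ pred j)) N)).
  intro i. apply (is_derive_sum (fun j t => c i j * a ^ i * (INR j * t ^ pred j))). intro j.
  auto_derive. auto. ring.
Qed.

Lemma Dx_eq (f : R -> R -> R) (a b l : R) : is_derive (fun t => f t b) a l -> Defs.Dx f a b = l.
Proof.
  intro H. apply is_derive_Reals in H. unfold Defs.Dx.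
  apply (uniqueness_limite (fun t => f t b) a); auto.
  apply (epsilon_spec (inhabits 0) (fun l => derivable_pt_lim (fun t => f t b) a l)).
  exists l; auto.
Qed.
Lemma Dy_eq (f : R -> R -> R) (a b l : R) : is_derive (fun t => f a t) b l -> Defs.Dy f a b = l.
Proof.
  intro H. apply is_derive_Reals in H. unfold Defs.Dy.
  apply (uniqueness_limite (fun t => f a t) b); auto.
  apply (epsilon_spec (inhabits 0) (fun l => derivable_pt_lim (fun t => f a t) b l)).
  exists l; auto.
Qed.

Lemma Dx_bip c N : Defs.Dx (bipoly c N) = FX c N.
Proof. apply functional_extensionality; intro a; apply functional_extensionality; intro b.
  apply Dx_eq, isdx_F. Qed.
Lemma Dy_bip c N : Defs.Dy (bipoly c N) = FY c N.
Proof. apply functional_extensionality; intro a; apply functional_extensionality; intro b.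
  apply Dy_eq, isdy_F. Qed.

Lemma Der_F c N a b : Derive (fun t => bipoly c N t b) a = FX c N a b.
Proof. apply is_derive_unique, isdx_F. Qed.
Lemma Der_Fy c N a b : Derive (fun t => bipoly c N a t) b = FY c N a b.
Proof. apply is_derive_unique, isdy_F. Qed.
Lemma Der_FX c N a b : Derive (fun t => FX c N t b) a = FXX c N a b.
Proof. apply is_derive_unique, isdx_FX. Qed.
Lemma Der_FXy c N a b : Derive (fun t => FX c N a t) b = FXY c N a b.
Proof. apply is_derive_unique, isdy_FX. Qed.
Lemma Der_FY c N a b : Derive (fun t => FY c N t b) a = FXY c N a b.
Proof. apply is_derive_unique, isdx_FY. Qed.
Lemma Der_FYy c N a b : Derive (fun t => FY c N a t) b = FYY c N a b.
Proof. apply is_derive_unique, isdy_FY. Qed.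

Definition H1x (al be ga de : R) x y := ((1 + be + ga - y * (al + be + ga + 2))*(4*x*y) - (x * (1 + be + ga - y * (al + be + ga + 2)) - de * (y * (al + ga + 1) - ga))*(4*y)) / (4 * x * y)^2.
Definition H2x (be ga de : R) x y := (- (2*x*(be+ga+1) - be*y + de*ga) * (4*x^2*y) - (- (x * (x * (be + ga + 1) - be * y) + de * (y + ga * x)))*(8*x*y)) / (4 * x ^ 2 * y)^2.
Definition H3x (al ga de : R) x y := (- de * (1 + al*y) * (4*x*y^2) - (- de * (x + al * x * y - y * (y * (al + ga + 1) - ga)))*(4*y^2)) / (4 * x * y ^ 2)^2.
Definition H5x (de : R) x y := ((y-1)*(2*x) - (de + x) * (y - 1)*2)/(2*x)^2.
Definition H6x (de : R) x y := (de*(y-1)*(2*x*y) - de * (x - y) * (y - 1)*(2*y))/(2*x*y)^2.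
Definition H7x (x y : R) := (y-1)/(2*y).
Definition H8x (de : R) x y := (((x-y)+(de+x))*(2*x*y) - (de + x) * (x - y)*(2*y))/(2*x*y)^2.
Definition qA (de a b : R) := 2 * (b - a) * (a + de) / a.
Definition qAa (de a b : R) := (2*(-(a+de) + (b-a))*a - 2*(b-a)*(a+de))/a^2.
Definition qAb (de a b : R) := 2*(a+de)/a.
Definition qK (be ga de a b : R) := (ga + be + 1) * a ^ 2 + (de * ga - be * b) * a + de * b.
Definition qB be ga de a b := qK be ga de a b / a^2.
Definition qBa be ga de a b := ((2*(ga+be+1)*a + de*ga - be*b)*a^2 - qK be ga de a b*(2*a))/a^4.
Definition qBb (be de a b : R) := (-be*a + de)/a^2.

Ltac nz := repeat rewrite Rmult_1_r; repeat apply Rmult_integral_contrapositive_currified;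
  first [assumption | (apply Ropp_neq_0_compat; assumption) | lra].
Opaque bipoly FX FY FXX FXY FYY.

Ltac exd1 := match goal with
  | |- ex_derive (fun x => bipoly ?c ?N x ?b) ?a => exact (ex_intro _ _ (isdx_F c N a b))
  | |- ex_derive (fun x => bipoly ?c ?N ?a x) ?b => exact (ex_intro _ _ (isdy_F c N a b))
  | |- ex_derive (fun x => FX ?c ?N x ?b) ?a => exact (ex_intro _ _ (isdx_FX c N a b))
  | |- ex_derive (fun x => FX ?c ?N ?a x) ?b => exact (ex_intro _ _ (isdy_FX c N a b))
  | |- ex_derive (fun x => FY ?c ?N x ?b) ?a => exact (ex_intro _ _ (isdx_FY c N a b))
  | |- ex_derive (fun x => FY ?c ?N ?a x) ?b => exact (ex_intro _ _ (isdy_FY c N a b))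
  | |- ex_derive (bipoly ?c ?N ?a) ?b => exact (ex_intro _ _ (isdy_F c N a b))
  | |- ex_derive (FX ?c ?N ?a) ?b => exact (ex_intro _ _ (isdy_FX c N a b))
  | |- ex_derive (FY ?c ?N ?a) ?b => exact (ex_intro _ _ (isdy_FY c N a b))
  | |- _ <> _ => nz
  | |- True => exact I
  end.
Ltac exd c N := repeat match goal with |- _ /\ _ => split end; exd1.

Lemma L2val be ga de c N a b : L2 be ga de (bipoly c N) a b =
  qA de a b * FX c N (-a) b + qB be ga de a b * (bipoly c N (-a) b - bipoly c N a b).
Proof. unfold L2, qA, qB, qK. rewrite Dx_bip. reflexivity. Qed.

Lemma D2x be ga de c N a b : a <> 0 ->
  Defs.Dx (L2 be ga de (bipoly c N)) a b =
  qAa de a b * FX c N (-a) b - qA de a b * FXX c N (-a) b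
  + qBa be ga de a b * (bipoly c N (-a) b - bipoly c N a b)
  + qB be ga de a b * (- FX c N (-a) b - FX c N a b).
Proof.
  intro ha. apply Dx_eq. unfold L2. rewrite Dx_bip. auto_derive.
  - exd c N.
  - Time rewrite ?Der_F, ?Der_Fy, ?Der_FX, ?Der_FXy, ?Der_FY, ?Der_FYy.
    unfold qAa, qA, qBa, qB, qK. field. nz.
Qed.

Lemma D2y be ga de c N a b : a <> 0 ->
  Defs.Dy (L2 be ga de (bipoly c N)) a b =
  qAb de a b * FX c N (-a) b + qA de a b * FXY c N (-a) b
  + qBb be de a b * (bipoly c N (-a) b - bipoly c N a b)
  + qB be ga de a b * (FY c N (-a) b - FY c N a b).
Proof.
  intro ha. apply Dy_eq. unfold L2. rewrite Dx_bip. auto_derive.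
  - exd c N.
  - rewrite ?Der_F, ?Der_Fy, ?Der_FX, ?Der_FXy, ?Der_FY, ?Der_FYy.
    unfold qAb, qA, qBb, qB, qK. field. nz.
Qed.

Lemma L1val al be ga de c N a b : L1 al be ga de (bipoly c N) a b =
  G5 de a b * FY c N (-a) (-b) + G6 de a b * FY c N a (-b)
  + G7 de a b * FX c N (-a) (-b) + G8 de a b * FX c N (-a) b
  + G1 al be ga de a b * bipoly c N (-a) (-b) + G2 be ga de a b * bipoly c N (-a) b
  + G3 al ga de a b * bipoly c N a (-b)
  - (G1 al be ga de a b + G2 be ga de a b + G3 al ga de a b) * bipoly c N a b.
Proof. unfold L1. rewrite Dx_bip, Dy_bip. reflexivity. Qed.

Lemma D1x al be ga de c N a b : a <> 0 -> b <> 0 ->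
  Defs.Dx (L1 al be ga de (bipoly c N)) a b =
  H5x de a b * FY c N (-a) (-b) + H6x de a b * FY c N a (-b) + H7x a b * FX c N (-a) (-b)
  + H8x de a b * FX c N (-a) b
  + H1x al be ga de a b * bipoly c N (-a) (-b) + H2x be ga de a b * bipoly c N (-a) b
  + H3x al ga de a b * bipoly c N a (-b)
  - (H1x al be ga de a b + H2x be ga de a b + H3x al ga de a b) * bipoly c N a b
  - G5 de a b * FXY c N (-a) (-b) + G6 de a b * FXY c N a (-b)
  - G7 de a b * FXX c N (-a) (-b) - G8 de a b * FXX c N (-a) b
  - G1 al be ga de a b * FX c N (-a) (-b) - G2 be ga de a b * FX c N (-a) b
  + G3 al ga de a b * FX c N a (-b)
  - (G1 al be ga de a b + G2 be ga de a b + G3 al ga de a b) * FX c N a b.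
Proof.
  intros ha hb. apply Dx_eq. unfold L1. rewrite Dx_bip, Dy_bip.
  unfold G1, G2, G3, G5, G6, G7, G8. auto_derive.
  - exd c N.
  - rewrite ?Der_F, ?Der_Fy, ?Der_FX, ?Der_FXy, ?Der_FY, ?Der_FYy.
    unfold H1x, H2x, H3x, H5x, H6x, H7x, H8x. field. split; nz.
Qed.


Lemma L1_unf al be ga de (f : R -> R -> R) a b : L1 al be ga de f a b =
  G5 de a b * Defs.Dy f (-a) (-b) + G6 de a b * Defs.Dy f a (-b)
  + G7 de a b * Defs.Dx f (-a) (-b) + G8 de a b * Defs.Dx f (-a) b
  + G1 al be ga de a b * f (-a) (-b) + G2 be ga de a b * f (-a) b + G3 al ga de a b * f a (-b)
  - (G1 al be ga de a b + G2 be ga de a b + G3 al ga de a b) * f a b.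
Proof. reflexivity. Qed.

Lemma L2_unf be ga de (f : R -> R -> R) a b : L2 be ga de f a b =
  qA de a b * Defs.Dx f (-a) b + qB be ga de a b * (f (-a) b - f a b).
Proof. reflexivity. Qed.

Theorem mainTheorem6 (al be ga de : R) (hd1 : de <> 1) (hd2 : de <> -1)
  (c : nat -> nat -> R) (N : nat) (x y : R) (hx : x <> 0) (hy : y <> 0) :
  L1 al be ga de (L2 be ga de (bipoly c N)) x y
  = L2 be ga de (L1 al be ga de (bipoly c N)) x y.
Proof.
  assert (hmx : -x <> 0) by nz. assert (hmy : -y <> 0) by nz.
  rewrite L1_unf.
  rewrite (D2y be ga de c N (-x) (-y)) by nz.
  rewrite (D2y be ga de c N x (-y)) by nz.
  rewrite (D2x be ga de c N (-x) (-y)) by nz.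
  rewrite (D2x be ga de c N (-x) y) by nz.
  rewrite (L2val be ga de c N (-x) (-y)), (L2val be ga de c N (-x) y),
    (L2val be ga de c N x (-y)), (L2val be ga de c N x y).
  rewrite L2_unf.
  rewrite (D1x al be ga de c N (-x) y) by nz.
  rewrite (L1val al be ga de c N (-x) y), (L1val al be ga de c N x y).
  rewrite !Ropp_involutive.
  unfold G1, G2, G3, G5, G6, G7, G8, H1x, H2x, H3x, H5x, H6x, H7x, H8x,
    qA, qAa, qAb, qB, qBa, qBb, qK.
  Time field. split; nz.
Qed.
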